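(* Let $f:2^V\to\mathbb{R}_+$ be a nonnegative supermodular function that is $r$-decomposable (not necessarily monotone), and let $k$ be an integer with $r<k\le n-1$. Run the following algorithm: $S_n\gets V$; for $i=n,\dots,k+1$, choose $v_i\in\arg\min_{v\in S_i}f(v\mid S_i\setminus\{v\})$ and set $S_{i-1}\gets S_i\setminus\{v_i\}$; output whichever of $S_k$ and $\emptyset$ has the larger function value. This algorithm achieves an approximation ratio of $O(n^{r-1}/k^{r-1})$ for the $\underline{k}$SPM problem on $f$.
   Context: $V$ is a finite set with $n=|V|$; $f(v\mid S)=f(S\cup\{v\})-f(S)$. Supermodular: $f(A)+f(B)\le f(A\cup B)+f(A\cap B)$. $f$ is $r$-decomposable if there exist $V_1,\dots,V_m\subseteq V$ with $|V_i|\le r$ and nonnegative supermodular $f_i:2^{V_i}\to\mathbb{R}_+$ with $f(S)=\sum_i f_i(S\cap V_i)$ for all $S$. The $\underline{k}$SPM problem asks for $S\subseteq V$ with $|S|\le k$ maximizing $f(S)$; approximation ratio $\rho$ means $\mathrm{OPT}\le\rho f(\text{output})$, constants in $O(\cdot)$ depending only on $r$. *)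

(* Defs.v *)
From HB Require Import structures.
From mathcomp Require Import all_boot all_order all_algebra.
Set Implicit Arguments. Unset Strict Implicit. Unset Printing Implicit Defensive.
Import Order.TTheory GRing.Theory Num.Theory.
Local Open Scope ring_scope.

Section Defs.
Variables (R : realFieldType) (V : finType).

Definition marg (f : {set V} -> R) (v : V) (S : {set V}) : R :=
  f (v |: S) - f S.

Definition supermodular (f : {set V} -> R) : Prop :=
  forall A B : {set V}, f A + f B <= f (A :|: B) + f (A :&: B).

Definition nonneg (f : {set V} -> R) : Prop := forall A : {set V}, 0 <= f A.

(* f_i : 2^{V_i} -> R_+ nonnegative supermodular, represented as a function on
   {set V} whose values/properties only matter on subsets of W. *)
Definition supermodular_on (W : {set V}) (g : {set V} -> R) : Prop :=
  forall A B : {set V}, A \subset W -> B \subset W ->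
    g A + g B <= g (A :|: B) + g (A :&: B).

Definition nonneg_on (W : {set V}) (g : {set V} -> R) : Prop :=
  forall A : {set V}, A \subset W -> 0 <= g A.

Definition decomposable (r : nat) (f : {set V} -> R) : Prop :=
  exists (m : nat) (Vs : 'I_m -> {set V}) (fs : 'I_m -> {set V} -> R),
    [/\ forall i, (#|Vs i| <= r)%N,
        forall i, nonneg_on (Vs i) (fs i),
        forall i, supermodular_on (Vs i) (fs i) &
        forall S, f S = \sum_(i < m) fs i (S :&: Vs i)].

Definition greedy_run (f : {set V} -> R) (k : nat) (S : nat -> {set V}) : Prop :=
  S #|V| = [set: V] /\
  forall i : nat, (k < i <= #|V|)%N ->
    exists2 v, v \in S i &
      (forall u, u \in S i -> marg f v (S i :\ v) <= marg f u (S i :\ u)) /\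
      S i.-1 = S i :\ v.

Definition greedy_output (f : {set V} -> R) (Sk : {set V}) : {set V} :=
  if f set0 <= f Sk then Sk else set0.

End Defs.

(* Main.v *)
Require Import Defs.
From HB Require Import structures.
From mathcomp Require Import all_boot all_order all_algebra.
From mathcomp Require Import zify ring lra.
Set Implicit Arguments. Unset Strict Implicit. Unset Printing Implicit Defensive.
Import Order.TTheory GRing.Theory Num.Theory.

Lemma ffact_lowb (r k m : nat) : m <= r -> r < k -> k ^ m <= r ^ m * k ^_ m.
Proof.
elim: m => [|m IH] Hm Hk; first by rewrite ffactn0.
rewrite expnS ffactnSr expnS.
have H1 := IH (ltnW Hm) Hk.
have H2 : k <= r * (k - m) by nia.
apply: (leq_trans (leq_mul H2 H1)).
have -> : r * (k - m) * (r ^ m * k ^_ m) = r * r ^ m * (k ^_ m * (k - m)) by lia.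
by [].
Qed.

Lemma ffact_upb (s m : nat) : s ^_ m <= s ^ m.
Proof.
elim: m => [|m IH]; first by rewrite ffactn0.
rewrite ffactnSr expnS mulnC; apply: leq_mul => //; exact: leq_subr.
Qed.

Lemma expn_mono (m n e : nat) : m <= n -> m ^ e <= n ^ e.
Proof. move=> H; elim: e => [|e IH] //; rewrite !expnS; exact: leq_mul. Qed.

Lemma final_nat (r k s n : nat) : r < k -> k <= s -> s <= n ->
  2 * k * r * (s ^_ r) * k ^ (r - 1) <= (4 + 2 * r ^ r.+1) * k ^_ r * s * n ^ (r - 1).
Proof.
case: r => [|r] Hk Hks Hsn; first by rewrite !muln0 mul0n.
rewrite subSS subn0.
have A := ffact_lowb (leqnn r.+1) Hk.
have B : s ^_ r.+1 <= s * n ^ r.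
  rewrite ffactnS; apply: leq_mul => //.
  apply: leq_trans (ffact_upb _ _) _; apply: expn_mono; lia.
have E : 2 * k * r.+1 * s ^_ r.+1 * k ^ r = 2 * r.+1 * k ^ r.+1 * s ^_ r.+1.
  by rewrite expnS; lia.
rewrite E.
apply: (leq_trans (leq_mul (leq_mul (leqnn _) A) B)).
have E2 : 2 * r.+1 * (r.+1 ^ r.+1 * k ^_ r.+1) * (s * n ^ r) =
   (2 * r.+1 ^ r.+2) * k ^_ r.+1 * s * n ^ r by rewrite (expnS _ r.+1); lia.
rewrite E2; apply: leq_mul => //; apply: leq_mul => //; apply: leq_mul => //.
exact: leq_addl.
Qed.

Local Open Scope ring_scope.

Lemma sum_marg (R : realFieldType) (V : finType) (r : nat) (f : {set V} -> R) :
  decomposable r f -> forall S : {set V}, \sum_(u in S) marg f u (S :\ u) <= r%:R * f S.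
Proof.
case=> m [Vs [fs [Hc Hn Hs Hf]]] S.
have E: forall u, u \in S -> marg f u (S :\ u) =
   \sum_(i < m) (fs i (S :&: Vs i) - fs i ((S :\ u) :&: Vs i)).
  by move=> u uS; rewrite /marg setD1K // !Hf -sumrB.
rewrite (eq_bigr _ E) exchange_big /= Hf mulr_sumr; apply: ler_sum => i _.
rewrite (bigID (fun u => u \in Vs i)) /=.
have -> : \sum_(u in S | u \notin Vs i)
   (fs i (S :&: Vs i) - fs i ((S :\ u) :&: Vs i)) = 0.
  apply: big1 => u /andP[_ uW].
  have -> : (S :\ u) :&: Vs i = S :&: Vs i.
    apply/setP => x; rewrite !inE; case: eqP => // ->.
    by rewrite (negbTE uW) !andbF.
  by rewrite subrr.
rewrite addr0.
apply: (le_trans (y := \sum_(u in S | u \in Vs i) fs i (S :&: Vs i))).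
  apply: ler_sum => u _; rewrite lerBlDr lerDl; apply: Hn; exact: subsetIr.
rewrite sumr_const -(mulr_natl (fs i _)); apply: ler_wpM2r; first by apply: Hn; exact: subsetIr.
rewrite ler_nat; apply: leq_trans (Hc i); apply: subset_leq_card.
by apply/subsetP => x; rewrite unfold_in => /andP[].
Qed.

Lemma marg_mono (R : realFieldType) (V : finType) (f : {set V} -> R) (A B : {set V}) v :
  supermodular f -> A \subset B -> v \notin B -> marg f v A <= marg f v B.
Proof.
move=> Hs AB vB; have := Hs (v |: A) B.
have -> : (v |: A) :|: B = v |: B.
  apply/setP => x; rewrite !inE; have := subsetP AB x.
  by case: (x \in A); case: (x \in B); case: (x == v) => // ->.
have -> : (v |: A) :&: B = A.
  apply/setP => x; rewrite !inE; have := subsetP AB x.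
  case: eqP => [->|_]; last by case: (x \in A); case: (x \in B) => // ->.
  by rewrite (negbTE vB) andbF; case: (v \in A) => // ->.
by rewrite /marg => H; lra.
Qed.

Lemma approx_mono (R : realFieldType) (V : finType) (f : {set V} -> R) (A B : {set V}) :
  nonneg f -> supermodular f -> A \subset B -> f A <= f B + f set0.
Proof.
move=> Hn Hs AB; have := Hs A (B :\: A).
have -> : A :|: (B :\: A) = B.
  apply/setP => x; rewrite !inE; have := subsetP AB x.
  by case: (x \in A); case: (x \in B) => // ->.
have -> : A :&: (B :\: A) = set0.
  by apply/setP => x; rewrite !inE; case: (x \in A); rewrite ?andbF.
move=> H; apply: le_trans H; rewrite lerDl; exact: Hn.
Qed.

Lemma peel (R : realFieldType) (V : finType) (f : {set V} -> R) (mu : R) : 0 <= mu ->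
  forall X : {set V}, exists T' : {set V},
    f X - #|X|%:R * mu <= f T' /\ forall v, v \in T' -> mu <= marg f v (T' :\ v).
Proof.
move=> mu0 X; move Hc: #|X| => c; elim: c X Hc => [|c IH] X Hc.
  exists X; split; first by rewrite mul0r subr0.
  by move=> v vX; move: Hc; rewrite (cardD1 v) vX.
case: (boolP [exists v in X, marg f v (X :\ v) < mu]) => [/exists_inP [v vX Hv]|Hno].
  have Hc' : #|X :\ v| = c by move: Hc; rewrite (cardsD1 v) vX add1n => -[].
  have [T' [H1 H2]] := IH _ Hc'.
  have Hr : #|X :\ v|%:R = c%:R :> R by rewrite Hc'.
  exists T'; split => //.
  move: Hv; rewrite /marg setD1K // => Hv; rewrite -addn1 natrD; lra.
exists X; split; first by rewrite lerBlDr lerDl mulr_ge0 // ?ler0n.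
move=> v vX; move/negP: Hno => Hno; rewrite leNgt; apply/negP => Hv.
by apply: Hno; apply/exists_inP; exists v.
Qed.

Lemma card_S (R : realFieldType) (V : finType) (f : {set V} -> R) k S :
  greedy_run f k S -> forall j, (k <= j <= #|V|)%N -> #|S j| = j.
Proof.
case=> H0 Hst.
have H : forall d, (d <= #|V| - k)%N -> #|S (#|V| - d)%N| = (#|V| - d)%N.
  elim => [|d IH] Hd; first by rewrite subn0 H0 cardsT.
  have Hi : (k < #|V| - d <= #|V|)%N by apply/andP; split; lia.
  have [v vS [_ Heq]] := Hst _ Hi.
  have -> : (#|V| - d.+1 = (#|V| - d).-1)%N by lia.
  rewrite Heq; move: (IH (ltnW Hd)); rewrite (cardsD1 v) vS add1n => E; lia.
move=> j /andP[H1 H2]; have := H (#|V| - j)%N.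
have -> : (#|V| - (#|V| - j) = j)%N by lia.
by apply; lia.
Qed.

Lemma step_ineq (R : realFieldType) (V : finType) (f : {set V} -> R) r k S j :
  greedy_run f k S -> decomposable r f -> (k < j <= #|V|)%N ->
  (j%:R - r%:R) * f (S j) <= j%:R * f (S j.-1).
Proof.
move=> Hg Hd Hj; have Hc : #|S j| = j by apply: (card_S Hg); lia.
case: (Hg) => _ Hst; have [v vS [Hmin Heq]] := Hst _ Hj.
have Hs := sum_marg Hd (S j).
have Hl : \sum_(u in S j) marg f v (S j :\ v) <= \sum_(u in S j) marg f u (S j :\ u).
  by apply: ler_sum => u uS; apply: Hmin.
move: (le_trans Hl Hs); rewrite sumr_const Hc -mulr_natl /marg setD1K // Heq.
move=> H; nra.
Qed.

Lemma chain_step (R : realFieldType) (V : finType) (f : {set V} -> R) r k S j :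
  greedy_run f k S -> decomposable r f -> (k < j <= #|V|)%N -> (r < k)%N ->
  (j.-1 ^_ r)%:R * f (S j) <= (j ^_ r)%:R * f (S j.-1).
Proof.
move=> Hg Hd Hj Hrk; have H := step_ineq Hg Hd Hj.
have j0 : 0 < j%:R :> R by rewrite ltr0n; lia.
rewrite -(ler_pM2l j0) !mulrA -natrM.
have -> : (j * j.-1 ^_ r = j ^_ r * (j - r))%N by rewrite -ffactnS ffactnSr.
rewrite natrM -mulrA (mulrC j%:R) -mulrA; apply: ler_wpM2l; first exact: ler0n.
by rewrite natrB; [exact: H | lia].
Qed.

Lemma chain (R : realFieldType) (V : finType) (f : {set V} -> R) r k S :
  nonneg f -> greedy_run f k S -> decomposable r f -> (r < k)%N ->
  forall d, (k + d <= #|V|)%N ->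
  (k ^_ r)%:R * f (S (k + d)%N) <= ((k + d) ^_ r)%:R * f (S k).
Proof.
move=> Hn Hg Hd Hrk; elim => [|d IH] Hkd; first by rewrite addn0.
have Hj : (k < k + d.+1 <= #|V|)%N by apply/andP; split; lia.
have A := chain_step Hg Hd Hj Hrk.
rewrite (_ : (k + d.+1).-1 = (k + d)%N) in A; last by lia.
have IH' := IH (ltac:(lia) : (k + d <= #|V|)%N).
have p0 : 0 < ((k + d) ^_ r)%:R :> R by rewrite ltr0n ffact_gt0; lia.
rewrite -(ler_pM2l p0) mulrCA.
apply: (le_trans (ler_wpM2l (ler0n _ _) A)).
rewrite mulrCA [X in _ <= X]mulrCA; apply: ler_wpM2l; first exact: ler0n.
done.
Qed.

Lemma aux1 (R : realFieldType) (a b c d : R) : a - b <= c -> b <= d -> d = a / 2 -> a / 2 <= c.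
Proof. move=> *; lra. Qed.
Lemma aux2 (R : realFieldType) (a b c e fo : R) : a <= b + c -> e/2 <= a -> b <= fo -> c <= fo -> e <= 4 * fo.
Proof. move=> *; lra. Qed.
Lemma aux3 (R : realFieldType) (a e fo : R) : e/2 <= a -> a <= fo -> 0 <= fo -> e <= 4 * fo.
Proof. move=> *; lra. Qed.

Theorem corollary5 (r : nat) :
  exists C : nat, forall (R : realFieldType) (V : finType) (f : {set V} -> R)
    (k : nat) (S : nat -> {set V}),
    nonneg f -> supermodular f -> decomposable r f ->
    (r < k)%N -> (k <= #|V| - 1)%N ->
    greedy_run f k S ->
    forall T : {set V}, (#|T| <= k)%N ->
      f T <= C%:R * (#|V|%:R ^+ (r - 1) / k%:R ^+ (r - 1))
                 * f (greedy_output f (S k)).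
Proof.
exists (4 + 2 * r ^ r.+1)%N.
move=> R V f k S Hn Hs Hd Hrk Hkn Hg T HT.
set C := (4 + 2 * r ^ r.+1)%N.
have k0 : (0 < k)%N by lia.
have HkV : (k <= #|V|)%N by lia.
have Hk0 : 0 < k%:R :> R by rewrite ltr0n.
set fo := f (greedy_output f (S k)).
have fo1 : f (S k) <= fo.
  rewrite /fo /greedy_output; case: ifP => // /negbT; rewrite -ltNge => /ltW //.
have fo2 : f set0 <= fo.
  by rewrite /fo /greedy_output; case: ifP.
have fo0 : 0 <= fo := le_trans (Hn set0) fo2.
set Q := (#|V|%:R ^+ (r - 1) / k%:R ^+ (r - 1)).
have Kp0 : 0 < k%:R ^+ (r - 1) :> R by rewrite exprn_gt0.
have Q1 : 1 <= Q.
  rewrite /Q ler_pdivlMr // mul1r -!natrX ler_nat; apply: expn_mono; exact: HkV.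
have C4 : 4 <= C%:R :> R by rewrite ler_nat leq_addr.
have C0 : 0 <= C%:R :> R by exact: ler0n.
have Hfin : forall x, x <= 4 * fo -> x <= C%:R * Q * fo.
  move=> x H; apply: (le_trans H); rewrite -mulrA.
  apply: (le_trans (ler_wpM2r fo0 C4)); apply: ler_wpM2l => //.
  exact: ler_peMl.
set M := f T.
set mu := M / (2 * k%:R).
have mu0 : 0 <= mu by rewrite divr_ge0 // ?mulr_ge0 // ?ler0n //; exact: Hn.
have [T' [HT1 HT2]] := peel f mu0 T.
have Ekmu : k%:R * mu = M / 2 by rewrite /mu; field; rewrite lt0r_neq0.
have HM : M / 2 <= f T'.
  have : #|T|%:R * mu <= k%:R * mu by apply: ler_wpM2r => //; rewrite ler_nat.
  move=> h; exact: (aux1 HT1 h Ekmu).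
case: (eqVneq T' set0) => [E|Hne].
  apply: Hfin; rewrite E in HM; exact: (aux3 HM fo2 fo0).
have exP : exists j, (k <= j)%N && (T' \subset S j).
  exists #|V|; apply/andP; split; first exact: HkV.
  by case: Hg => -> _; exact: subsetT.
case: (ex_minnP exP) => s /andP[Hks Hsub] Hmin.
have Hsn : (s <= #|V|)%N.
  apply: Hmin; apply/andP; split; first exact: HkV.
  by case: Hg => -> _; exact: subsetT.
case: (eqVneq s k) => [Esk|Hnsk].
  rewrite Esk in Hsub; have := approx_mono Hn Hs Hsub.
  move=> H; apply: Hfin; exact: (aux2 H HM fo1 fo2).
have Hi : (k < s <= #|V|)%N by apply/andP; split; [clear -Hks Hnsk; lia | exact: Hsn].
have [v vS [Hmin' Heq]] := (proj2 Hg) _ Hi.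
have vT : v \in T'.
  apply/negPn/negP => vn.
  have : (s <= s.-1)%N.
    apply: Hmin; apply/andP; split; first by clear -Hi; lia.
    apply/subsetP => x xT; rewrite Heq !inE (subsetP Hsub x xT) andbT.
    by apply/eqP => Exv; move: vn; rewrite -Exv xT.
  move=> h; clear -h Hi; lia.
have Hall : forall u, u \in S s -> mu <= marg f u (S s :\ u).
  move=> u uS; apply: (le_trans (HT2 v vT)); apply: le_trans (Hmin' u uS).
  apply: marg_mono => //; first exact: setSD.
  by rewrite !inE eqxx.
have Hsum : s%:R * mu <= r%:R * f (S s).
  have Hc : #|S s| = s by apply: (card_S Hg); clear -Hi; lia.
  apply: (le_trans _ (sum_marg Hd (S s))).
  have : \sum_(u in S s) mu <= \sum_(u in S s) marg f u (S s :\ u).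
    by apply: ler_sum => u uS; exact: Hall.
  by rewrite sumr_const Hc -(mulr_natl mu).
have Hch := chain Hn Hg Hd Hrk (ltac:(clear -Hsn Hks; lia) : (k + (s - k) <= #|V|)%N).
rewrite subnKC in Hch; last by clear -Hks; lia.
set K := (k ^_ r)%:R : R in Hch.
set Ss := (s ^_ r)%:R : R in Hch.
have K0 : 0 < K by rewrite /K ltr0n ffact_gt0; clear -Hrk; lia.
have s0 : 0 < s%:R :> R by rewrite ltr0n; clear -Hi; lia.
have E1 : K * s%:R * M <= 2 * k%:R * r%:R * Ss * f (S k).
  have h1 : K * (s%:R * mu) <= K * (r%:R * f (S s)) by apply: ler_wpM2l; [exact: ltW|].
  have h2 : r%:R * (K * f (S s)) <= r%:R * (Ss * f (S k)) by apply: ler_wpM2l; [exact: ler0n|].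
  have e1 : K * s%:R * M = 2 * k%:R * (K * (s%:R * mu)).
    by rewrite /mu; field; rewrite lt0r_neq0.
  rewrite e1; have e2 : 2 * k%:R * r%:R * Ss * f (S k) = 2 * k%:R * (r%:R * (Ss * f (S k))) by ring.
  rewrite e2; apply: ler_wpM2l; first by rewrite mulr_ge0 ?ler0n.
  apply: (le_trans h1); rewrite mulrCA; exact: h2.
have fSk0 : 0 <= f (S k) := Hn _.
have Hnat := final_nat Hrk Hks Hsn.
have Hnat' : (2 * k * r * s ^_ r * k ^ (r - 1))%:R * f (S k) <=
             (C * k ^_ r * s * #|V| ^ (r - 1))%:R * f (S k).
  by apply: ler_wpM2r => //; rewrite ler_nat.
suff : M <= C%:R * Q * f (S k).
  move=> H; apply: (le_trans H); apply: ler_wpM2l => //.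
  by rewrite mulr_ge0 // ltW // (lt_le_trans ltr01 Q1).
have -> : C%:R * Q * f (S k) = (C%:R * #|V|%:R ^+ (r - 1) * f (S k)) / k%:R ^+ (r - 1).
  by rewrite /Q; field; rewrite lt0r_neq0.
rewrite ler_pdivlMr //.
have KS0 : 0 < K * s%:R by rewrite mulr_gt0.
rewrite -(ler_pM2l KS0).
apply: (le_trans (y := k%:R ^+ (r - 1) * (2 * k%:R * r%:R * Ss * f (S k)))).
  have -> : K * s%:R * (M * k%:R ^+ (r - 1)) = k%:R ^+ (r - 1) * (K * s%:R * M) by ring.
  by apply: ler_wpM2l; [exact: ltW|].
move: Hnat'; rewrite !natrM !natrX -/K -/Ss => H.
have e1 : k%:R ^+ (r - 1) * (2 * k%:R * r%:R * Ss * f (S k)) =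
  2 * k%:R * r%:R * Ss * k%:R ^+ (r - 1) * f (S k) by ring.
have e2 : K * s%:R * (C%:R * #|V|%:R ^+ (r - 1) * f (S k)) =
  C%:R * K * s%:R * #|V|%:R ^+ (r - 1) * f (S k) by ring.
by rewrite e1 e2.
Qed.
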